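(* There exists a binary $[40,8]$ linear code $N$ that is doubly even, contains the all-ones vector, and whose dual has minimum weight at least $4$, such that no Type~II $\mathbb{Z}_4$-code $C$ of length $40$ with $C^{(1)}=N$ is extremal.
   Context: A $\mathbb{Z}_4$-code of length $n$ is a $\mathbb{Z}_4$-submodule of $\mathbb{Z}_4^n$; it is self-dual if it equals its dual with respect to $x\cdot y=\sum x_iy_i \pmod 4$. The Euclidean weight of $x$ is $n_1(x)+4n_2(x)+n_3(x)$, $n_\alpha(x)$ being the number of coordinates equal to $\alpha$. A Type~II $\mathbb{Z}_4$-code is a self-dual code all of whose codewords have Euclidean weight divisible by $8$; it is extremal if its minimum Euclidean weight equals $8\lfloor n/24\rfloor+8$ (so $16$ for $n=40$). The residue code is $C^{(1)}=\{c\bmod 2: c\in C\}$. A binary code is doubly even if all codeword weights are divisible by $4$. *)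

(* Defs.v *)
From HB Require Import structures.
From mathcomp Require Import all_boot all_order all_algebra.
Set Implicit Arguments. Unset Strict Implicit. Unset Printing Implicit Defensive.
Import GRing.Theory.
Local Open Scope ring_scope.

Definition hwt n (v : 'rV['F_2]_n) : nat := #|[set i : 'I_n | v 0 i != 0]|.

Definition dot2 n (u v : 'rV['F_2]_n) : 'F_2 := \sum_(i < n) u 0 i * v 0 i.

Definition in_dual2 n (N : {vspace 'rV['F_2]_n}) (v : 'rV['F_2]_n) : Prop :=
  forall u, u \in N -> dot2 u v = 0.

Definition doubly_even n (N : {vspace 'rV['F_2]_n}) : Prop :=
  forall v, v \in N -> (4 %| hwt v)%N.

Definition all_ones n : 'rV['F_2]_n := const_mx 1.

Definition dual_min_wt_ge n (N : {vspace 'rV['F_2]_n}) (d : nat) : Prop :=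
  forall v, in_dual2 N v -> v != 0 -> (d <= hwt v)%N.

(* a Z4-code: a Z4-submodule (= additive subgroup) of Z4^n *)
Definition Z4code n (C : {set 'rV['Z_4]_n}) : Prop :=
  0 \in C /\ (forall x y, x \in C -> y \in C -> x - y \in C).

Definition dot4 n (x y : 'rV['Z_4]_n) : 'Z_4 := \sum_(i < n) x 0 i * y 0 i.

Definition dual4 n (C : {set 'rV['Z_4]_n}) : {set 'rV['Z_4]_n} :=
  [set y | [forall x in C, dot4 x y == 0]].

Definition self_dual4 n (C : {set 'rV['Z_4]_n}) : Prop := C = dual4 C.

Definition ncoord n (x : 'rV['Z_4]_n) (alpha : nat) : nat :=
  #|[set i : 'I_n | nat_of_ord (x 0 i) == alpha]|.

Definition ewt n (x : 'rV['Z_4]_n) : nat :=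
  (ncoord x 1 + 4 * ncoord x 2 + ncoord x 3)%N.

Definition typeII n (C : {set 'rV['Z_4]_n}) : Prop :=
  Z4code C /\ self_dual4 C /\ (forall x, x \in C -> (8 %| ewt x)%N).

Definition min_ewt_eq n (C : {set 'rV['Z_4]_n}) (d : nat) : Prop :=
  (exists2 x, x \in C & x != 0 /\ ewt x = d) /\
  (forall x, x \in C -> x != 0 -> (d <= ewt x)%N).

Definition extremal n (C : {set 'rV['Z_4]_n}) : Prop :=
  min_ewt_eq C (8 * (n %/ 24) + 8)%N.

(* reduction mod 2 and residue code C^(1) = { c mod 2 : c in C } *)
Definition red2 n (c : 'rV['Z_4]_n) : 'rV['F_2]_n :=
  \row_i ((nat_of_ord (c 0 i))%:R : 'F_2).

Definition residue_is n (C : {set 'rV['Z_4]_n}) (N : {vspace 'rV['F_2]_n}) : Prop :=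
  forall v : 'rV['F_2]_n, v \in N <-> exists2 c, c \in C & red2 c = v.

(* Main.v *)
Require Import Defs.
From HB Require Import structures.
From mathcomp Require Import all_boot all_order all_algebra.
Set Implicit Arguments. Unset Strict Implicit. Unset Printing Implicit Defensive.
Import GRing.Theory.
Local Open Scope ring_scope.

Lemma F2_cases (a : 'F_2) : a = 0 \/ a = 1.
Proof. case: a => [[|[|//]] ?]; [left|right]; exact/val_inj. Qed.

Lemma F2_addd (a : 'F_2) : a + a = 0.
Proof. by case: (F2_cases a) => ->; apply/val_inj. Qed.

Lemma F2_bool (a : 'F_2) : a = (a != 0)%:R.
Proof. by case: (F2_cases a) => ->; apply/val_inj. Qed.

Lemma F2_nat n : (n%:R : 'F_2) = (odd n)%:R.
Proof.
elim: n => [|n IH]; first by [].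
rewrite -natr1 IH /=; case: (odd n); by apply/val_inj.
Qed.

Lemma sum_count (s : seq nat) (P : pred nat) :
  (\sum_(i <- s) (P i : nat))%N = count P s.
Proof. by elim: s => [|x s IH]; rewrite ?big_nil ?big_cons //= IH. Qed.

Definition brow (f : nat -> bool) : 'rV['F_2]_40 := \row_(k < 40) (f k)%:R.

Lemma sum_ord_count (f : nat -> bool) :
  (\sum_(k < 40) (f k : nat))%N = count f (iota 0 40).
Proof. by rewrite -(big_mkord xpredT (fun k => (f k : nat))) sum_count. Qed.

Lemma hwtE n (v : 'rV['F_2]_n) : hwt v = (\sum_(k < n) ((v ord0 k != 0%R) : nat))%N.
Proof.
rewrite /hwt -sum1_card big_mkcond /=; apply: eq_bigr => k _.
by rewrite inE; case: (v 0 k != 0).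
Qed.

Lemma hwt_brow f : hwt (brow f) = count f (iota 0 40).
Proof.
rewrite hwtE -sum_ord_count; apply: eq_bigr => k _.
by rewrite mxE; case: (f k).
Qed.

Lemma dot2_brow f g : dot2 (brow f) (brow g) = (count (fun k => f k && g k) (iota 0 40))%:R.
Proof.
rewrite /dot2 -sum_ord_count natr_sum; apply: eq_bigr => k _.
by rewrite !mxE; case: (f k); case: (g k); rewrite ?mulr0 ?mulr1 ?mul0r.
Qed.

Lemma dot2C n (u v : 'rV['F_2]_n) : dot2 u v = dot2 v u.
Proof. by apply: eq_bigr => k _; rewrite mulrC. Qed.

Lemma dot2Dr n (u v w : 'rV['F_2]_n) : dot2 u (v + w) = dot2 u v + dot2 u w.
Proof. by rewrite /dot2 -big_split; apply: eq_bigr => k _; rewrite mxE mulrDr. Qed.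

Lemma dot2Zr n (u v : 'rV['F_2]_n) a : dot2 u (a *: v) = a * dot2 u v.
Proof. by rewrite /dot2 mulr_sumr; apply: eq_bigr => k _; rewrite mxE mulrCA. Qed.

Lemma dot2_sumr n m (u : 'rV['F_2]_n) (F : 'I_m -> 'rV['F_2]_n) :
  dot2 u (\sum_(i < m) F i) = \sum_(i < m) dot2 u (F i).
Proof.
rewrite /dot2 exchange_big /=; apply: eq_bigr => k _.
by rewrite summxE mulr_sumr.
Qed.

Lemma dot2_delta n (u : 'rV['F_2]_n) k : dot2 u (delta_mx 0 k) = u 0 k.
Proof.
rewrite /dot2 (bigD1 k) //= big1 ?addr0; first by rewrite mxE !eqxx mulr1.
by move=> j /negbTE jk; rewrite mxE jk andbF mulr0.
Qed.


Definition cols : seq nat := [:: 7; 1; 2; 4; 13; 14; 8; 30; 27; 29; 46; 59; 77; 88; 93; 94; 107; 126; 125; 120; 139; 142; 141; 155; 157; 158; 173; 174; 168; 184; 190; 187; 206; 216; 222; 221; 235; 237; 232; 253].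

Definition gbit (i k : nat) : bool := odd (nth 0 cols k %/ 2 ^ i).
Definition gen (i : nat) : 'rV['F_2]_40 := brow (gbit i).
Definition gens : seq 'rV['F_2]_40 := mkseq gen 8.
Definition NN : {vspace 'rV['F_2]_40} := <<gens>>%VS.

Lemma brow_add f g : brow f + brow g = brow (fun k => f k (+) g k).
Proof.
apply/matrixP => i j; rewrite !mxE.
by case: (f j); case: (g j); apply/val_inj.
Qed.

Lemma brow_ext f g : all (fun k => f k == g k) (iota 0 40) -> brow f = brow g.
Proof.
move/allP => H; apply/matrixP => i j; rewrite !mxE.
by rewrite (eqP (H j _)) // mem_iota /=.
Qed.

Lemma gen_in i : (i < 8)%N -> gen i \in NN.
Proof.
move=> Hi; apply: memv_span; rewrite /gens.
have -> : gen i = nth 0 (mkseq gen 8) i by rewrite nth_mkseq.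
by apply: mem_nth; rewrite size_mkseq.
Qed.

Lemma gens_orth_comp :
  all (fun i => all (fun j => ~~ odd (count (fun k => gbit i k && gbit j k) (iota 0 40)))
     (iota 0 8)) (iota 0 8).
Proof. by []. Qed.

Lemma gens_orth i j : (i < 8)%N -> (j < 8)%N -> dot2 (gen i) (gen j) = 0.
Proof.
move=> Hi Hj; rewrite dot2_brow F2_nat.
have H1 : i \in iota 0 8 by rewrite mem_iota.
have H2 : j \in iota 0 8 by rewrite mem_iota.
by rewrite (negbTE (allP (allP gens_orth_comp i H1) j H2)).
Qed.

Lemma gens_dbl_comp : all (fun i => 4 %| count (gbit i) (iota 0 40))%N (iota 0 8).
Proof. by []. Qed.

Lemma gens_dbl i : (i < 8)%N -> (4 %| hwt (gen i))%N.
Proof.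
move=> Hi; rewrite hwt_brow.
have H1 : i \in iota 0 8 by rewrite mem_iota.
exact: (allP gens_dbl_comp i H1).
Qed.

Lemma dual_gens x : (forall i, (i < 8)%N -> dot2 (gen i) x = 0) -> in_dual2 NN x.
Proof.
move=> H u /coord_span ->.
rewrite dot2C dot2_sumr big1 // => i _.
rewrite dot2Zr dot2C (nth_mkseq _ _ (ltn_ord i)) H ?mulr0 //.
Qed.

Lemma NN_orth u w : u \in NN -> w \in NN -> dot2 u w = 0.
Proof.
move=> Hu Hw; apply: (dual_gens _ Hu) => i Hi.
rewrite dot2C; apply: (dual_gens _ Hw) => j Hj.
by rewrite gens_orth.
Qed.


Lemma F2_11 : (1 + 1 : 'F_2) = 0. Proof. by apply/val_inj. Qed.
Lemma F2_10 : (1 : 'F_2) != 0. Proof. by []. Qed.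

Lemma sum8 (F : nat -> 'F_2) : \sum_(i < 8) F i = F 0%N + F 1%N + F 2%N + F 3%N + F 4%N + F 5%N + F 6%N + F 7%N.
Proof. by rewrite -(big_mkord xpredT F) unlock /= addr0 !addrA. Qed.

Lemma hwtD n (u w : 'rV['F_2]_n) : dot2 u w = 0 -> (4 %| hwt u)%N -> (4 %| hwt w)%N ->
  (4 %| hwt (u + w))%N.
Proof.
move=> Huw Hu Hw.
set K := (\sum_(k < n) ((u ord0 k != 0%R) && (w ord0 k != 0%R) : nat))%N.
have E : (hwt (u + w) + 2 * K = hwt u + hwt w)%N.
  rewrite !hwtE /K big_distrr -!big_split /=; apply: eq_bigr => k _; rewrite mxE.
  case: (F2_cases (u 0 k)) => ->; case: (F2_cases (w 0 k)) => ->;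
  by rewrite ?addr0 ?add0r ?F2_11 ?eqxx ?F2_10.
have HK : dot2 u w = K%:R.
  rewrite /dot2 /K natr_sum; apply: eq_bigr => k _.
  case: (F2_cases (u 0 k)) => ->; case: (F2_cases (w 0 k)) => ->;
  by rewrite ?mulr0 ?mul0r ?mulr1 ?eqxx ?F2_10.
move: Huw; rewrite HK F2_nat.
case Ko: (odd K); first by move=> H; move: F2_10; rewrite -H.

move=> _.
have := odd_double_half K; rewrite Ko add0n => HK2.
move: E; rewrite -HK2 => E.
have : (4 %| hwt (u + w) + 2 * (K./2).*2)%N by rewrite E dvdn_add.
rewrite (_ : 2 * (K./2).*2 = 4 * K./2)%N; last by rewrite -mul2n mulnA.
by rewrite dvdn_addl ?dvdn_mulr.
Qed.

Lemma NN_dbl : doubly_even NN.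
Proof.
move=> v Hv; rewrite (coord_span Hv).
pose P w := (w \in NN) && (4 %| hwt w)%N.
set S := \sum_i _; suff /andP[_ ->] : P S by [].
apply: (big_ind P).
- by rewrite /P mem0v /hwt; apply/andP; split => //; rewrite (_ : [set _ | _] = set0) ?cards0 //; apply/setP => j; by rewrite !inE mxE eqxx.
- move=> x y /andP[Hx Dx] /andP[Hy Dy]; apply/andP; split; first exact: memvD.
  by apply: hwtD => //; apply: NN_orth.
- move=> i _; have Hi : (i < 8)%N by [].
  rewrite /P (_ : _`_i = gen i); last exact: (nth_mkseq _ _ Hi).
  set a := coord _ i v; case: (F2_cases a) => ->.
    rewrite scale0r mem0v /hwt; apply/andP; split => //; rewrite (_ : [set _ | _] = set0) ?cards0 //; apply/setP => j; by rewrite !inE mxE eqxx.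
  by rewrite scale1r gen_in // gens_dbl.
Qed.


Lemma NN_eq p (k : 'I_8 -> 'F_2) (Hp : (p < 40)%N) :
  \sum_(i < 8) k i *: (map_tuple gen (iota_tuple 8 0))`_i = 0 ->
  let F := fun i => k (inord i) * (gbit i p)%:R in
  F 0%N + F 1%N + F 2%N + F 3%N + F 4%N + F 5%N + F 6%N + F 7%N = 0.
Proof.
move=> Hk F; rewrite -sum8; move: Hk.
move=> Hk; have := congr1 (fun M : 'rV_40 => M 0 (Ordinal Hp)) Hk.
rewrite summxE /= mxE => H; rewrite -[X in _ = X]H; apply: eq_bigr => i _.
rewrite /F mxE inord_val (_ : _`_i = gen i); last exact: (nth_mkseq _ _ (ltn_ord i)).
by rewrite mxE.
Qed.

Lemma NN_dim : \dim NN = 8%N.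
Proof.
have : free (map_tuple gen (iota_tuple 8 0)).
  apply/freeP => k Hk.
  have E p (Hp : (p < 40)%N) := NN_eq Hp Hk.
  have E1 := E 1%N erefl; have E2 := E 2%N erefl; have E3 := E 3%N erefl.
  have E4 := E 4%N erefl; have E7 := E 7%N erefl; have E10 := E 10%N erefl.
  have E12 := E 12%N erefl; have E20 := E 20%N erefl.
  move: E1 E2 E3 E4 E7 E10 E12 E20; rewrite /gbit /=.
  rewrite !mulr1 !mulr0 !addr0 !add0r => E0 E1 E2.
  rewrite ?E0 ?E1 ?E2 ?add0r ?addr0 => E3; rewrite ?E3 ?add0r ?addr0 => E4.
  rewrite ?E4 ?add0r ?addr0 => E5; rewrite ?E5 ?add0r ?addr0 => E6.
  rewrite ?E6 ?add0r ?addr0 => E7 i.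
  rewrite -[i]inord_val; case: i => [[|[|[|[|[|[|[|[|//]]]]]]]] ?] //=.
by move/eqP => ->.
Qed.


Lemma ones_brow : all_ones 40 = brow (fun _ => true).
Proof. by apply/matrixP => i j; rewrite !mxE. Qed.

Lemma ones_in : all_ones 40 \in NN.
Proof.
have -> : all_ones 40 = gen 0 + gen 1 + gen 2 + gen 3.
  by rewrite ones_brow /gen !brow_add; apply: brow_ext; vm_compute.
by rewrite !memvD // gen_in.
Qed.

Lemma sum_hwt n (v : 'rV['F_2]_n) : \sum_k v 0 k = (hwt v)%:R.
Proof. by rewrite hwtE natr_sum; apply: eq_bigr => k _; exact: F2_bool. Qed.

Lemma dot2_ones v : dot2 (all_ones 40) v = \sum_k v 0 k.
Proof. by apply: eq_bigr => k _; rewrite mxE mul1r. Qed.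

Lemma F2_b (b : bool) : (b%:R : 'F_2) = 0 -> b = false.
Proof. by case: b => // /eqP; rewrite F2_10. Qed.

Lemma cols_inj_comp : all (fun a => all (fun b => (a == b) ||
   ~~ all (fun i => gbit i a == gbit i b) (iota 0 8)) (iota 0 40)) (iota 0 40).
Proof. by vm_compute. Qed.

Lemma NN_dual : dual_min_wt_ge NN 4.
Proof.
move=> v Hv Hnz.
have Hev : odd (hwt v) = false.
  by apply: F2_b; rewrite -F2_nat -sum_hwt -dot2_ones; apply: Hv; exact: ones_in.
have H0 : hwt v != 0%N.
  apply: contra Hnz => /eqP /cards0_eq H; apply/eqP/matrixP => i j.
  rewrite ord1 mxE; apply/eqP; apply: contraFT (in_set0 j) => Hj; by rewrite -H inE.
case Hh: (hwt v) => [|[|[|[|m]]]] //; try by rewrite Hh in H0 Hev.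
move: Hh; rewrite /hwt => /eqP /cards2P [a [b [Hab HS]]].
have Hvd : v = delta_mx 0 a + delta_mx 0 b.
  apply/matrixP => i j; rewrite ord1 !mxE /=.
  have := congr1 (fun A : {set 'I_40} => j \in A) HS; rewrite !inE => Hj.
  rewrite (F2_bool (v 0 j)) Hj.
  case: (j =P a) => [Ea|_]; case: (j =P b) => [Eb|_] //=.
  - by move: Hab; rewrite -Ea -Eb eqxx.
  - by rewrite addr0.
  - by rewrite add0r.
  - by rewrite addr0.
have Hg i : (i < 8)%N -> gbit i a = gbit i b.
  move=> Hi; have := Hv _ (gen_in Hi); rewrite Hvd dot2Dr !dot2_delta !mxE.
  by case: (gbit i a); case: (gbit i b) => //= /eqP; rewrite ?addr0 ?add0r ?F2_11 ?F2_10 ?eqxx.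
have Ha : (a : nat) \in iota 0 40 by rewrite mem_iota add0n ltn_ord.
have Hb : (b : nat) \in iota 0 40 by rewrite mem_iota add0n ltn_ord.
move: (allP (allP cols_inj_comp _ Ha) _ Hb) => /orP [/eqP/val_inj Eab | ].
  by rewrite Eab eqxx in Hab.
case/negP; apply/allP => i; rewrite mem_iota /= => Hi; apply/eqP; exact: Hg.
Qed.


Lemma Z4_cases (a : 'Z_4) : [\/ a = 0, a = 1, a = 2%:R | a = 3%:R].
Proof.
case: a => [[|[|[|[|//]]]] ?]; [constructor 1|constructor 2|constructor 3|constructor 4];
  exact/val_inj.
Qed.

Definition phi (b : 'F_2) : 'Z_4 := if b == 0 then 0 else 2%:R.

Lemma phi_add a b : phi (a + b) = phi a + phi b.
Proof.
by case: (F2_cases a) => ->; case: (F2_cases b) => ->; rewrite /phi ?addr0 ?add0r ?F2_11 ?eqxx //=; apply/val_inj.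
Qed.

Lemma phi0 : phi 0 = 0. Proof. by rewrite /phi eqxx. Qed.

Lemma mul_phi (y : 'Z_4) b : y * phi b = phi ((y : nat)%:R * b).
Proof.
case: (F2_cases b) => ->; rewrite ?mulr0 ?phi0 // mulr1 F2_nat.
by case: (Z4_cases y) => ->; rewrite /phi /=; apply/val_inj.
Qed.

Lemma Z4_even (a : 'Z_4) e : ~~ odd a -> a + phi ((a == 2%:R)%:R + e) = phi e.
Proof.
case: (Z4_cases a) => -> //= _; case: (F2_cases e) => ->; rewrite /phi /=; apply/val_inj => //.
Qed.

Lemma Z4_odd (a : 'Z_4) e : odd a -> odd (nat_of_ord (a + phi e)%R).
Proof.
by case: (Z4_cases a) => -> //= _; case: (F2_cases e) => ->; rewrite /phi /=.
Qed.

Lemma Z4_phi2 e : (phi e : nat) = 2%N -> e != 0.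
Proof. by case: (F2_cases e) => ->. Qed.

Definition lift2 (x : 'rV['F_2]_40) : 'rV['Z_4]_40 := \row_k phi (x 0 k).

Lemma lift2_in (C : {set 'rV['Z_4]_40}) (N : {vspace 'rV['F_2]_40}) x :
  typeII C -> residue_is C N -> in_dual2 N x -> lift2 x \in C.
Proof.
move=> [_ [Hsd _]] Hres Hx; rewrite Hsd inE; apply/forall_inP => y Hy.
have Hr : red2 y \in N by apply/(Hres _).2; exists y.
rewrite /dot4.
have -> : \sum_(i < 40) y 0 i * lift2 x 0 i = phi (dot2 (red2 y) x).
  rewrite /dot2 (big_morph phi phi_add phi0); apply: eq_bigr => i _.
  by rewrite !mxE mul_phi.
by rewrite (Hx _ Hr) phi0.
Qed.


Definition pick (b3 b4 b5 b6 b7 : bool) : nat * nat :=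
  match b3, b4, b5, b6, b7 with
  | false, false, false, false, false => (0, 0)%N
  | true, false, false, false, false => (0, 4)%N
  | false, true, false, false, false => (4, 7)%N
  | true, true, false, false, false => (0, 7)%N
  | false, false, true, false, false => (4, 10)%N
  | true, false, true, false, false => (0, 10)%N
  | false, true, true, false, false => (4, 11)%N
  | true, true, true, false, false => (0, 11)%N
  | false, false, false, true, false => (4, 12)%N
  | true, false, false, true, false => (0, 12)%N
  | false, true, false, true, false => (4, 13)%N
  | true, true, false, true, false => (0, 13)%N
  | false, false, true, true, false => (4, 16)%N
  | true, false, true, true, false => (0, 16)%N
  | false, true, true, true, false => (4, 17)%N
  | true, true, true, true, false => (0, 17)%N
  | false, false, false, false, true => (4, 20)%N
  | true, false, false, false, true => (0, 20)%N
  | false, true, false, false, true => (4, 23)%N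
  | true, true, false, false, true => (0, 23)%N
  | false, false, true, false, true => (4, 26)%N
  | true, false, true, false, true => (0, 26)%N
  | false, true, true, false, true => (4, 29)%N
  | true, true, true, false, true => (0, 29)%N
  | false, false, false, true, true => (4, 32)%N
  | true, false, false, true, true => (0, 32)%N
  | false, true, false, true, true => (4, 33)%N
  | true, true, false, true, true => (0, 33)%N
  | false, false, true, true, true => (4, 36)%N
  | true, false, true, true, true => (0, 36)%N
  | false, true, true, true, true => (4, 39)%N
  | true, true, true, true, true => (0, 39)%N
  end.

Lemma pick_ok b3 b4 b5 b6 b7 : let pq := pick b3 b4 b5 b6 b7 in
  [&& (pq.1 < 40)%N, (pq.2 < 40)%N, gbit 3 pq.1 (+) gbit 3 pq.2 == b3,
      gbit 4 pq.1 (+) gbit 4 pq.2 == b4, gbit 5 pq.1 (+) gbit 5 pq.2 == b5,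
      gbit 6 pq.1 (+) gbit 6 pq.2 == b6 & gbit 7 pq.1 (+) gbit 7 pq.2 == b7].
Proof. by case: b3; case: b4; case: b5; case: b6; case: b7; vm_compute. Qed.

Lemma syndrome (s : 'rV['F_2]_40) : exists p q : 'I_40,
  forall i, (3 <= i < 8)%N -> (gbit i p)%:R + (gbit i q)%:R = dot2 (gen i) s.
Proof.
have := pick_ok (dot2 (gen 3) s != 0) (dot2 (gen 4) s != 0) (dot2 (gen 5) s != 0)
  (dot2 (gen 6) s != 0) (dot2 (gen 7) s != 0).
set pq := pick _ _ _ _ _ => /and5P [Hp Hq H3 H4 /and3P [H5 H6 H7]].
exists (Ordinal Hp), (Ordinal Hq) => i /andP [Hi1 Hi2] /=.
have E b1 b2 : ((b1 : bool)%:R + (b2 : bool)%:R : 'F_2) = (b1 (+) b2)%:R.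
  by case: b1; case: b2; apply/val_inj.
rewrite E (F2_bool (dot2 (gen i) s)).
case: i Hi1 Hi2 => [|[|[|[|[|[|[|[|//]]]]]]]] //= _ _; by move/eqP: H3 => ->
  || by move/eqP: H4 => -> || by move/eqP: H5 => -> || by move/eqP: H6 => -> || by move/eqP: H7 => ->.
Qed.


Lemma v4_in : brow (fun k => (k < 4)%N) \in NN.
Proof.
have -> : brow (fun k => (k < 4)%N) = gen 0 + gen 1 + gen 2.
  by rewrite /gen !brow_add; apply: brow_ext; vm_compute.
by rewrite !memvD // gen_in.
Qed.

Lemma F2_bool_inj (b1 b2 : bool) : (b1%:R : 'F_2) = b2%:R -> b1 = b2.
Proof. by case: b1; case: b2 => // /(congr1 val). Qed.

Lemma gen_entry i (k : 'I_40) : gen i 0 k = (gbit i k)%:R.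
Proof. by rewrite mxE. Qed.

Theorem mainTheorem13 :
  exists N : {vspace 'rV['F_2]_40},
    [/\ \dim N = 8%N, doubly_even N, all_ones 40 \in N, dual_min_wt_ge N 4
      & forall C : {set 'rV['Z_4]_40},
          typeII C -> residue_is C N -> ~ extremal C].
Proof.
exists NN; split; [exact: NN_dim | exact: NN_dbl | exact: ones_in | exact: NN_dual |].
move=> C HC Hres [_ Hmin].
have [[C0 Csub] _] := HC.
have [c Hc Hcv] := (Hres _).1 v4_in.
have Hodd (k : 'I_40) : odd (c 0 k) = (k < 4)%N.
  have := congr1 (fun M : 'rV_40 => M 0 k) Hcv; rewrite !mxE F2_nat; exact: F2_bool_inj.
pose s : 'rV['F_2]_40 := \row_k (c 0 k == 2%:R)%:R.
have [p [q Hpq]] := syndrome s.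
pose y := s + (delta_mx 0 p + delta_mx 0 q).
pose z := dot2 (gen 0) y *: delta_mx 0 (inord 1) + dot2 (gen 1) y *: delta_mx 0 (inord 2)
        + dot2 (gen 2) y *: delta_mx 0 (inord 3) : 'rV['F_2]_40.
pose x := y + z.
have Hx : in_dual2 NN x.
  apply: dual_gens => i Hi.
  have Hz : dot2 (gen i) z = dot2 (gen 0) y * (gbit i 1)%:R + dot2 (gen 1) y * (gbit i 2)%:R
      + dot2 (gen 2) y * (gbit i 3)%:R.
    by rewrite /z !dot2Dr !dot2Zr !dot2_delta !gen_entry !inordK.
  rewrite /x dot2Dr Hz.
  have Hy j : (3 <= j < 8)%N -> dot2 (gen j) y = 0.
    move=> Hj; rewrite /y !dot2Dr !dot2_delta !gen_entry Hpq //; exact: F2_addd.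
  clear Hz; case: i Hi => [|[|[|[|[|[|[|[|//]]]]]]]] _ /=;
    rewrite ?mulr1n ?mulr0n ?mulr0 ?mulr1 ?addr0 ?add0r ?F2_addd ?Hy //.
have Hc' : c + lift2 x \in C.
  have H1 := Csub _ _ C0 (lift2_in HC Hres Hx).
  by have := Csub _ _ Hc H1; rewrite sub0r opprK.
have ne (k : 'I_40) j : (j < 4)%N -> (4 <= k)%N -> (k == inord j) = false.
  move=> Hj Hk; apply/negbTE; apply: contraTneq Hk => ->; rewrite inordK.
    by rewrite -ltnNge.
  exact: (leq_trans Hj).
have Hc'v (k : 'I_40) : (4 <= k)%N ->
    (c + lift2 x) 0 k = phi ((delta_mx 0 p + delta_mx 0 q : 'rV['F_2]_40) 0 k).
  move=> Hk; rewrite mxE [lift2 x 0 k]mxE /x /y /z.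
  rewrite !mxE /= (ne k 1%N) ?(ne k 2%N) ?(ne k 3%N) // !mulr0n !mulr0 !addr0.
  by apply: Z4_even; rewrite Hodd ltnNge Hk.
pose c' := c + lift2 x.
have Hc'odd (k : 'I_40) : (k < 4)%N -> odd (c' 0 k).
  by move=> Hk; rewrite /c' !mxE; apply: Z4_odd; rewrite Hodd.
have Hnz : c' != 0.
  apply/eqP => H0; have := Hc'odd ord0 erefl; by rewrite H0 mxE.
pose S := [set i : 'I_40 | (i < 4)%N].
have cardS : (#|S| <= 4)%N.
  pose sq : seq 'I_40 := [seq inord i | i <- iota 0 4].
  have : (#|S| <= #|sq|)%N.
    apply: subset_leq_card; apply/subsetP => i; rewrite inE => Hi; apply/mapP.
    by exists (val i); [rewrite mem_iota | rewrite inord_val].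
  move=> H; apply: leq_trans H _; apply: leq_trans (card_size _) _; by rewrite size_map.
have Hphi e : (nat_of_ord (phi e) == 1%N) = false /\ (nat_of_ord (phi e) == 3%N) = false.
  by rewrite /phi; case: (e == 0).
have H13 : (ncoord c' 1 + ncoord c' 3 <= 4)%N.
  rewrite /ncoord -cardsUI.
  have -> : [set i | nat_of_ord (c' 0 i) == 1%N] :&: [set i | nat_of_ord (c' 0 i) == 3%N] = set0.
    by apply/setP => i; rewrite !inE; case: eqP => // ->.
  rewrite cards0 addn0; apply: leq_trans cardS; apply: subset_leq_card.
  apply/subsetP => i; rewrite !inE; case: (ltnP i 4) => // Hi.
  by rewrite Hc'v //; case: (Hphi ((delta_mx 0 p + delta_mx 0 q : 'rV['F_2]_40) 0 i)) => -> ->.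
have H2 : (ncoord c' 2 <= 2)%N.
  apply: (@leq_trans #|[set p; q]|); last by rewrite cards2; case: (p != q).
  apply: subset_leq_card; apply/subsetP => i; rewrite !inE => /eqP Hv.
  case: (ltnP i 4) => Hi.
    by have := Hc'odd i Hi; rewrite Hv.
  move: Hv; rewrite Hc'v // => /Z4_phi2; rewrite !mxE /=.
  by case: (i == p); case: (i == q); rewrite ?F2_11 ?eqxx.
have := Hmin _ Hc' Hnz; rewrite (_ : (8 * (40 %/ 24) + 8 = 16)%N) // /ewt addnAC.
have : (ncoord c' 1 + ncoord c' 3 + 4 * ncoord c' 2 <= 4 + 4 * 2)%N.
  by apply: leq_add => //; rewrite leq_mul2l.
by move=> H H'; have := leq_trans H' H.
Qed.
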